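(* Let $\Gamma$ be an antipodal tight graph $\mathrm{AT}4(p,q,2)$ with vertex set $X$, and let $x\in X$. Let $W$ and $W'$ be irreducible $T(x)$-modules with endpoint $2$; each is a one-dimensional subspace of $E^*_2(x)V$ spanned by an eigenvector of $E^*_2(x)AE^*_2(x)$, and let $\eta$ and $\eta'$ be the corresponding eigenvalues. Then $W$ and $W'$ are isomorphic as $T(x)$-modules if and only if $\eta=\eta'$.
   Context: For integers $p\ge 1$, $q\ge 2$, an $\mathrm{AT}4(p,q,2)$ is a non-bipartite distance-regular antipodal double cover of diameter $4$ with intersection array $\{q(pq+p+q),\,(q^2-1)(p+1),\,q(p+q)/2,\,1;\ 1,\,q(p+q)/2,\,(q^2-1)(p+1),\,q(pq+p+q)\}$; such a graph is tight and $Q$-polynomial. Let $A$ be the adjacency matrix, $\partial$ the distance, $V=\mathbb{C}^X$, and for $0\le i\le 4$ let $E^*_i(x)$ be the diagonal matrix with $(E^*_i(x))_{yy}=1$ if $\partial(x,y)=i$ and $0$ otherwise. $T(x)$ is the subalgebra of $\mathrm{Mat}_X(\mathbb{C})$ generated by $A,E^*_0(x),\dots,E^*_4(x)$. An irreducible $T(x)$-module is a nonzero $T(x)$-invariant subspace of $V$ with no invariant subspaces other than $0$ and itself; its endpoint is $\min\{i:E^*_i(x)W\neq0\}$. Two $T(x)$-modules $W,W'$ are isomorphic if there is a linear bijection $\sigma:W\to W'$ with $\sigma Bw=B\sigma w$ for all $B\in T(x)$, $w\in W$. *)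

(* Defs.v *)
From HB Require Import structures.
From mathcomp Require Import all_boot all_order all_algebra all_field.
From mathcomp Require Import complex.
From mathcomp Require Import Rstruct.
Set Implicit Arguments. Unset Strict Implicit. Unset Printing Implicit Defensive.
Import Order.TTheory GRing.Theory Num.Theory.
Local Open Scope ring_scope.

Definition Cplx : numClosedFieldType := complex Rdefinitions.R.

Fixpoint ball (X : finType) (e : rel X) (n : nat) (x : X) : {set X} :=
  if n is m.+1 then ball e m x :|: [set y | [exists z in ball e m x, e z y]]
  else [set x].

Definition dist_eq (X : finType) (e : rel X) (i : nat) (x y : X) : bool :=
  (y \in ball e i x) && (if i is m.+1 then y \notin ball e m x else true).

Definition nbrs_at (X : finType) (e : rel X) (x y : X) (j : nat) : {set X} :=
  [set z | e y z & dist_eq e j x z].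

(* Gamma = (X, e) is a (connected, simple) distance-regular graph of diameter 4
   with intersection array
   {q(pq+p+q), (q^2-1)(p+1), q(p+q)/2, 1 ; 1, q(p+q)/2, (q^2-1)(p+1), q(pq+p+q)},
   i.e. an AT4(p,q,2) (p >= 1, q >= 2).  The entry q(p+q)/2 is encoded exactly
   by  2 * c = q(p+q). *)
Definition is_AT4_pq2 (X : finType) (e : rel X) (p q : nat) : Prop :=
  [/\ (1 <= p)%N /\ (2 <= q)%N, symmetric e, irreflexive e,
      (forall x y : X, exists i, (i <= 4)%N /\ dist_eq e i x y) &
      (forall x y : X,
        [/\ dist_eq e 0 x y -> #|nbrs_at e x y 1| = (q * (p * q + p + q))%N,
            dist_eq e 1 x y -> #|nbrs_at e x y 0| = 1%N /\
                               #|nbrs_at e x y 2| = ((q ^ 2 - 1) * (p + 1))%N,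
            dist_eq e 2 x y -> (2 * #|nbrs_at e x y 1| = q * (p + q))%N /\
                               (2 * #|nbrs_at e x y 3| = q * (p + q))%N,
            dist_eq e 3 x y -> #|nbrs_at e x y 2| = ((q ^ 2 - 1) * (p + 1))%N /\
                               #|nbrs_at e x y 4| = 1%N &
            dist_eq e 4 x y -> #|nbrs_at e x y 3| = (q * (p * q + p + q))%N])].

(* V = C^X, identified with column vectors indexed by 'I_#|X| via enum_val. *)
Definition adjmx (X : finType) (e : rel X) : 'M[Cplx]_#|X| :=
  \matrix_(i, j) (e (enum_val i) (enum_val j))%:R.

Definition dualidem (X : finType) (e : rel X) (x : X) (i : nat) : 'M[Cplx]_#|X| :=
  \matrix_(j, k) ((j == k) && dist_eq e i x (enum_val j))%:R.

Definition in_Terwilliger (X : finType) (e : rel X) (x : X) (B : 'M[Cplx]_#|X|) : Prop :=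
  forall P : 'M[Cplx]_#|X| -> Prop,
    P (adjmx e) ->
    (forall i, (i <= 4)%N -> P (dualidem e x i)) ->
    P 1%:M ->
    (forall M N, P M -> P N -> P (M + N)) ->
    (forall (a : Cplx) M, P M -> P (a *: M)) ->
    (forall M N, P M -> P N -> P (M *m N)) ->
    P B.

Definition is_Tmodule (X : finType) (e : rel X) (x : X)
    (W : {vspace 'cV[Cplx]_#|X|}) : Prop :=
  forall B, in_Terwilliger e x B -> forall w, w \in W -> B *m w \in W.

Definition irreducible_Tmodule (X : finType) (e : rel X) (x : X)
    (W : {vspace 'cV[Cplx]_#|X|}) : Prop :=
  [/\ is_Tmodule e x W, W != 0%VS &
      forall U : {vspace 'cV[Cplx]_#|X|},
        is_Tmodule e x U -> (U <= W)%VS -> U = 0%VS \/ U = W].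

Definition has_endpoint (X : finType) (e : rel X) (x : X)
    (W : {vspace 'cV[Cplx]_#|X|}) (r : nat) : Prop :=
  (forall i, (i < r)%N -> forall w, w \in W -> dualidem e x i *m w = 0) /\
  exists2 w, w \in W & dualidem e x r *m w != 0.

Definition Tmodule_iso (X : finType) (e : rel X) (x : X)
    (W W' : {vspace 'cV[Cplx]_#|X|}) : Prop :=
  exists sigma : 'cV[Cplx]_#|X| -> 'cV[Cplx]_#|X|,
    [/\ {in W &, forall u v, sigma (u + v) = sigma u + sigma v},
        forall a : Cplx, {in W, forall u, sigma (a *: u) = a *: sigma u},
        {in W, forall u, sigma u \in W'},
        {in W &, injective sigma} /\
          (forall v, v \in W' -> exists2 u, u \in W & sigma u = v) &
        forall B, in_Terwilliger e x B ->
          {in W, forall u, sigma (B *m u) = B *m sigma u}].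

(* Main.v *)
Require Import Defs.
From HB Require Import structures.
From mathcomp Require Import all_boot all_order all_algebra all_field.
Import GRing.Theory Num.Theory.
Local Open Scope ring_scope.

Lemma ball_mono (X : finType) (e : rel X) (x : X) m n :
  (m <= n)%N -> ball e m x \subset ball e n x.
Proof.
move=> /subnK <-; elim: (n - m)%N => [|k IH] //=.
exact: subset_trans IH (subsetUl _ _).
Qed.

Lemma dist_uniq (X : finType) (e : rel X) (x y : X) i j :
  dist_eq e i x y -> dist_eq e j x y -> i = j.
Proof.
wlog: i j / (i <= j)%N.
  move=> H Hi Hj; case: (leqP i j) => h; first exact: H.
  by symmetry; apply: H => //; apply: ltnW.
rewrite leq_eqVlt => /orP [/eqP //|lt].
case/andP=> Hi _; case: j lt => // j lt /andP [_ Hn].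
by move: Hn; rewrite (subsetP (@ball_mono X e x i j lt) _ Hi).
Qed.

Lemma dualidem_diag (X : finType) (e : rel X) (x : X) i :
  dualidem e x i = diag_mx (\row_k (dist_eq e i x (enum_val k))%:R).
Proof.
apply/matrixP=> a b; rewrite !mxE; case: (eqVneq a b) => [->|nab] /=.
  by rewrite mulr1n.
by rewrite mulr0n.
Qed.

Lemma dualidemM (X : finType) (e : rel X) (x : X) i j :
  dualidem e x i *m dualidem e x j = if i == j then dualidem e x i else 0.
Proof.
rewrite !dualidem_diag mulmx_diag.
apply/matrixP=> a b; case: eqP => [<-|nij]; rewrite !mxE.
  by case: dist_eq; rewrite ?mul1r ?mul0r.
case: (a == b); last by rewrite mulr0n.
case Hi: (dist_eq e i x _); case Hj: (dist_eq e j x _); rewrite ?mul0r ?mulr0 //.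
by case: nij; exact: (@dist_uniq _ _ _ _ _ _ Hi Hj).
Qed.

Lemma scal_inj (n : nat) (c d : Cplx) (v : 'cV[Cplx]_n) : v != 0 -> c *: v = d *: v -> c = d.
Proof.
move=> nv H; apply/eqP; rewrite -subr_eq0; apply: contraR nv => nz.
have: (c - d) *: v == 0 by rewrite scalerBl H subrr.
by rewrite scaler_eq0 (negbTE nz).
Qed.

Lemma A_inT (X : finType) (e : rel X) (x : X) : in_Terwilliger e x (adjmx e).
Proof. by move=> P HA. Qed.
Lemma E_inT (X : finType) (e : rel X) (x : X) i : (i <= 4)%N -> in_Terwilliger e x (dualidem e x i).
Proof. by move=> hi P HA HE *; apply: HE. Qed.

Lemma line_facts (X : finType) (e : rel X) (x : X) (W : {vspace 'cV[Cplx]_#|X|}) w eta :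
  is_Tmodule e x W -> has_endpoint e x W 2 -> W = <[w]>%VS -> w != 0 ->
  dualidem e x 2 *m adjmx e *m dualidem e x 2 *m w = eta *: w ->
  dualidem e x 2 *m w = w /\ adjmx e *m w = eta *: w.
Proof.
move=> HT [_ [u uW Eu]] HW nw Heta; subst W.
have wW : w \in <[w]>%VS := memv_line w.
have [c Ec] := vlineP _ _ (HT _ (@E_inT X e x 2 (leqnn 2)) w wW).
have c1 : c = 1.
  have cn : c != 0.
    apply: contraNneq Eu => c0; case/vlineP: uW => k ->.
    by rewrite -scalemxAr Ec c0 scale0r scaler0.
  have := congr1 (mulmx (dualidem e x 2)) Ec.
  rewrite mulmxA dualidemM eqxx -scalemxAr Ec scalerA => /(@scal_inj _ _ _ _ nw).
  by move/(congr1 (fun z => z / c)); rewrite mulfK // divff.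
rewrite c1 scale1r in Ec; split=> //.
have [a Ea] := vlineP _ _ (HT _ (@A_inT X e x) w wW).
move: Heta; rewrite -mulmxA Ec -mulmxA Ea -scalemxAr Ec => /(@scal_inj _ _ _ _ nw) ->.
by [].
Qed.

Lemma common_eig (X : finType) (e : rel X) (x : X) (w w' : 'cV[Cplx]_#|X|) eta B :
  dualidem e x 2 *m w = w -> adjmx e *m w = eta *: w ->
  dualidem e x 2 *m w' = w' -> adjmx e *m w' = eta *: w' ->
  in_Terwilliger e x B -> exists b, B *m w = b *: w /\ B *m w' = b *: w'.
Proof.
move=> E2w Aw E2w' Aw' HB.
apply: (HB (fun B => exists b, B *m w = b *: w /\ B *m w' = b *: w')).
- by exists eta.
- move=> i _; case: (eqVneq i 2) => [->|ni]; first by exists 1; rewrite !scale1r.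
  exists 0; rewrite !scale0r -{1}E2w -{1}E2w' !mulmxA dualidemM (negbTE ni).
  by rewrite !mul0mx.
- by exists 1; rewrite !mul1mx !scale1r.
- move=> M N [b1 [H1 H1']] [b2 [H2 H2']]; exists (b1 + b2).
  by rewrite !mulmxDl H1 H1' H2 H2' !scalerDl.
- move=> a M [b [H H']]; exists (a * b).
  by rewrite -!scalemxAl H H' !scalerA.
- move=> M N [b1 [H1 H1']] [b2 [H2 H2']]; exists (b1 * b2).
  by rewrite -!mulmxA H2 H2' -!scalemxAr H1 H1' !scalerA mulrC.
Qed.

Arguments line_facts {X e x W w eta}.
Arguments common_eig {X e x w w' eta B}.
Arguments scal_inj {n c d v}.
Arguments A_inT {X e x}.

Theorem lemma8p4 (X : finType) (e : rel X) (p q : nat) (x : X)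
    (W W' : {vspace 'cV[Cplx]_#|X|}) (w w' : 'cV[Cplx]_#|X|) (eta eta' : Cplx) :
  is_AT4_pq2 e p q ->
  irreducible_Tmodule e x W -> has_endpoint e x W 2 ->
  irreducible_Tmodule e x W' -> has_endpoint e x W' 2 ->
  W = <[w]>%VS -> w != 0 ->
  dualidem e x 2 *m adjmx e *m dualidem e x 2 *m w = eta *: w ->
  W' = <[w']>%VS -> w' != 0 ->
  dualidem e x 2 *m adjmx e *m dualidem e x 2 *m w' = eta' *: w' ->
  (Tmodule_iso e x W W' <-> eta = eta').
Proof.
move=> _ [HT _ _] HE [HT' _ _] HE' HW nw Heta HW' nw' Heta'.
have [E2w Aw] := line_facts HT HE HW nw Heta.
have [E2w' Aw'] := line_facts HT' HE' HW' nw' Heta'.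
subst W W'.
split.
- case=> sigma [_ sZ sW [sinj _] sB].
  have wW : w \in <[w]>%VS := memv_line w.
  have [c Ec] := vlineP _ _ (sW w wW).
  have cn : c != 0.
    apply: contraNneq nw => c0.
    have s0 : sigma 0 = 0.
      by have := sZ 0 w wW; rewrite !scale0r.
    apply/eqP; apply: sinj => //; first exact: mem0v.
    by rewrite Ec c0 scale0r s0.
  have := sB _ A_inT w wW.
  rewrite Aw (sZ eta w wW) Ec -scalemxAr Aw' !scalerA => /(scal_inj nw').
  by move/eqP; rewrite mulrC (inj_eq (mulfI cn)) => /eqP.
- move=> eeta; subst eta'.
  have [i0 Hi0] : exists i0, w i0 0 != 0.
    have: [exists i, w i 0 != 0].
      apply: contraNT nw => /existsPn H; apply/eqP/matrixP => i j.
      by rewrite ord1 mxE; apply/eqP/negPn/H.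
    by case/existsP=> i Hi; exists i.
  pose sigma (u : 'cV[Cplx]_#|X|) := (u i0 0 / w i0 0) *: w'.
  have sE k : sigma (k *: w) = k *: w'.
    by rewrite /sigma mxE mulfK.
  exists sigma; split.
  + move=> u v /vlineP [k1 ->] /vlineP [k2 ->].
    by rewrite -scalerDl !sE scalerDl.
  + move=> a u /vlineP [k ->]; by rewrite scalerA !sE scalerA.
  + move=> u /vlineP [k ->]; by rewrite sE memvZ // memv_line.
  + split.
      move=> u v /vlineP [k1 ->] /vlineP [k2 ->]; rewrite !sE.
      by move/(scal_inj nw') ->.
    move=> v /vlineP [k ->]; exists (k *: w); first by rewrite memvZ // memv_line.
    by rewrite sE.
  + move=> B HB u /vlineP [k ->].
    have [b [Hb Hb']] := common_eig E2w Aw E2w' Aw' HB.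
    rewrite sE -(scalemxAr k B w) -(scalemxAr k B w') Hb Hb' !scalerA sE. done.
Qed.
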